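(* Let $k\ge 1$ and $\ast\in\{\Box,\circ\}$. Let $\mathcal M^\ast_{2k+1,0}\subseteq \mathcal M^\ast_{2k+1}$ be the set of those colorings whose central square $k+1$ is land. Then the map $\mathrm{red}\circ\mathrm{contr}$ is a bijection $\mathcal M^\ast_{2k+1,0}\to\mathcal N_k$.
   Context: Colorings. Each square of a square-tiled surface is colored water or land. Two distinct squares are adjacent if they share an edge after all edge identifications; a set of squares is connected if its induced adjacency graph is connected (empty set counts as connected). (N1): the water is connected. For an interior (non-boundary) vertex $v$, its square-degree is the number of distinct squares having $v$ as a corner. (N2$\Box$): no interior vertex of square-degree $4$ has all incident squares water. (N2$\circ$): no interior vertex of any square-degree has all incident squares water. A $2\times k$ Nurikabe rectangle is a coloring of the $2\times k$ grid (no identifications) with connected water and no $2\times 2$ block of water squares; $\mathcal N_k$ is the set of these. Tile $[0,n]\times[0,1]$ by unit squares $[j-1,j]\times[0,1]$, called square $j$. The $1\times n$ Möbius strip identifies $(x,1)\sim(n-x,0)$ for $x\in[0,n]$ (top edge of square $j$ glued to bottom edge of square $n+1-j$); its boundary is the image of the vertical sides. $\mathcal M^\ast_n$ is the set of colorings of the $1\times n$ Möbius strip satisfying (N1) and (N2$\ast$). Contraction: for a coloring of the $1\times(2k+1)$ Möbius strip, $\mathrm{contr}$ gives the coloring of the $1\times 2k$ Möbius strip obtained by deleting square $k+1$, with square $j\le k$ keeping position $j$ and square $j\ge k+2$ moving to position $j-1$. Rectangular reduction: for a coloring of the $1\times 2k$ Möbius strip, $\mathrm{red}$ gives the coloring of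 the $2\times k$ grid whose column $j$ ($1\le j\le k$) has top square colored as square $j$ and bottom square colored as square $2k+1-j$. *)

(* Defs.v *)
From mathcomp Require Import all_boot.
Unset Printing Implicit Defensive.

(* Colorings: a square colored [true] is WATER, [false] is LAND. *)

Inductive star := Box | Circ.

Definition water_connected (T : finType) (adj : rel T) (c : {ffun T -> bool}) : Prop :=
  forall x y, c x -> c y -> connect [rel u v | [&& adj u v, c u & c v]] x y.

(* ---------- 1 x n Moebius strip ----------
   Square j (1-based) of the paper is the ordinal j-1 : 'I_n.
   Two distinct squares are adjacent iff they share a vertical edge
   (consecutive squares) or the top edge of one is glued to the bottom edge
   of the other (square j with square n+1-j, i.e. ordinal i with rev_ord i). *)
Definition madj (n : nat) : rel 'I_n :=
  fun i j => (i != j) && [|| (i : nat).+1 == j, (j : nat).+1 == i | j == rev_ord i].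

(* Interior vertices: the lattice point (x,0) with 0 < x < n, which is
   identified with (n-x,1); every interior vertex has this form.
   The squares having it as a corner are squares x, x+1 (corners at (x,0))
   and n-x, n-x+1 (corners at (n-x,1)), 1-based; here 0-based. *)
Definition vsquares (n x : nat) : {set 'I_n} :=
  [set i : 'I_n | [|| (i : nat).+1 == x, (i : nat) == x,
                      (i : nat).+1 == n - x | (i : nat) == n - x]].

(* (N2 box) / (N2 circ). Square-degree of the vertex = #|vsquares n x|. *)
Definition N2 (s : star) (n : nat) (c : {ffun 'I_n -> bool}) : Prop :=
  forall x : nat, 0 < x < n ->
    (s = Box -> #|vsquares n x| = 4) ->
    ~~ [forall i in vsquares n x, c i].

Definition inM (s : star) (n : nat) (c : {ffun 'I_n -> bool}) : Prop :=
  water_connected _ (madj n) c /\ N2 s n c.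

Lemma center_lt (k : nat) : k < (k + k).+1.
Proof. by rewrite ltnS leq_addr. Qed.
Definition center (k : nat) : 'I_(k + k).+1 := Ordinal (center_lt k).

Definition inM0 (s : star) (k : nat) (c : {ffun 'I_(k + k).+1 -> bool}) : Prop :=
  inM s (k + k).+1 c /\ c (center k) = false.

(* ---------- 2 x k grid ----------
   Squares are pairs (row, column), row ord0 = top, ord_max = bottom. *)
Definition gadj (k : nat) : rel ('I_2 * 'I_k) :=
  fun p q => ((p.2 == q.2) && (p.1 != q.1)) ||
             ((p.1 == q.1) && (((p.2 : nat).+1 == q.2) || ((q.2 : nat).+1 == p.2))).

Definition top : 'I_2 := ord0.
Definition bot : 'I_2 := ord_max.

Definition no_block (k : nat) (d : {ffun 'I_2 * 'I_k -> bool}) : Prop :=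
  forall j j' : 'I_k, (j : nat).+1 = j' ->
    ~~ [&& d (top, j), d (bot, j), d (top, j') & d (bot, j')].

Definition inN (k : nat) (d : {ffun 'I_2 * 'I_k -> bool}) : Prop :=
  water_connected _ (gadj k) d /\ no_block k d.

Definition contr (k : nat) (c : {ffun 'I_(k + k).+1 -> bool}) : {ffun 'I_(k + k) -> bool} :=
  [ffun j => c (lift (center k) j)].

(* rectangular reduction: column j has top = square j, bottom = square 2k+1-j
   (1-based), i.e. ordinals j and 2k-1-j = rev_ord j. *)
Definition red (k : nat) (c : {ffun 'I_(k + k) -> bool}) : {ffun 'I_2 * 'I_k -> bool} :=
  [ffun p => if p.1 == top then c (lshift k p.2) else c (rev_ord (lshift k p.2))].

(* Main.v *)
Require Import Defs.
From mathcomp Require Import all_boot.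
From mathcomp Require Import zify.

Definition phi (k : nat) (p : 'I_2 * 'I_k) : 'I_(k + k).+1 :=
  inord (if p.1 == top then (p.2 : nat) else k + k - p.2).

Lemma phiE k p : (phi k p : nat) = if p.1 == top then (p.2 : nat) else k + k - p.2.
Proof. rewrite /phi inordK //; case: ifP => _; case: p => a [j Hj] /=; lia. Qed.

Lemma phiT k j : (phi k (top, j) : nat) = j.
Proof. by rewrite phiE eqxx. Qed.

Lemma phiB k j : (phi k (bot, j) : nat) = k + k - j.
Proof. by rewrite phiE. Qed.

Lemma redE k c p : red k (contr k c) p = c (phi k p).
Proof.
rewrite !ffunE; case: ifP => H; congr (c _); apply/val_inj;
rewrite /= /bump phiE H; case: p H => a [j Hj] /= H; lia.
Qed.

Lemma ord2P (a : 'I_2) : a = top \/ a = bot.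
Proof.
case: a => [[|[|m]] H]; [left|right|by []]; exact/val_inj.
Qed.

Lemma phi_inj k : injective (phi k).
Proof.
move=> [a j] [b l] /(congr1 (@nat_of_ord _)); rewrite !phiE /=.
case: (ord2P a) => ->; case: (ord2P b) => -> /=; move: (ltn_ord j) (ltn_ord l);
  rewrite ?eqxx //= => Hj Hl E.
- by rewrite (val_inj E).
- lia.
- lia.
- have E' : (j : nat) = l by lia. by rewrite (val_inj E').
Qed.

Lemma phi_center k p : phi k p != center k.
Proof.
apply/eqP=> /(congr1 (@nat_of_ord _)); rewrite phiE /=; case: p => a [j Hj] /=; case: ifP => _; lia.
Qed.

Definition psi k (i : 'I_(k.+1 + k.+1).+1) : 'I_2 * 'I_k.+1 :=
  if i < k.+1 then (top, inord i) else (bot, inord (k.+1 + k.+1 - i)).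

Lemma phiK k i : i != center k.+1 -> phi k.+1 (psi k i) = i.
Proof.
move=> Hi; apply/val_inj => /=; rewrite /psi.
have Hi' : (i : nat) != k.+1 by apply: contra Hi => /eqP E; apply/eqP/val_inj.
have bt : (bot == top) = false by [].
case: ifP => H /=; rewrite phiE /= ?eqxx ?bt /= inordK //; move: (ltn_ord i) Hi' H; lia.
Qed.

Lemma preim k i : i != center k.+1 -> exists p, phi k.+1 p = i.
Proof. by move=> H; exists (psi k i); apply: phiK. Qed.

Lemma adjE k p q : gadj k p q = madj (k + k).+1 (phi k p) (phi k q).
Proof.
rewrite /gadj /madj -val_eqE /= !phiE.
case: p q => a [j Hj] [b [l Hl]] /=.
case: (ord2P a) => ->; case: (ord2P b) => -> /=; rewrite ?eqxx //=;
  rewrite -?val_eqE /= ?phiT ?phiB; move: Hj Hl => /= Hj Hl; lia.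
Qed.

Lemma connect_map (A B : finType) (e : rel A) (e' : rel B) (f : A -> B) :
  (forall x y, e x y -> e' (f x) (f y)) ->
  forall x y, connect e x y -> connect e' (f x) (f y).
Proof.
move=> H x y /connectP [s]; elim: s x => [|z s IH] x /=.
  by move=> _ ->; exact: connect0.
case/andP => exz pz Ey; apply: connect_trans (connect1 (H _ _ exz)) (IH _ pz Ey).
Qed.

Lemma wc_transfer (A B : finType) (eA : rel A) (eB : rel B) (f : A -> B)
  (dA : {ffun A -> bool}) (cB : {ffun B -> bool}) :
  injective f -> (forall p, dA p = cB (f p)) ->
  (forall p q, eA p q = eB (f p) (f q)) ->
  (forall b, cB b -> exists p, f p = b) ->
  water_connected A eA dA <-> water_connected B eB cB.
Proof.
move=> finj Hd He Hpre; split.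
- move=> W b1 b2 c1 c2.
  have [p1 E1] := Hpre _ c1; have [p2 E2] := Hpre _ c2.
  rewrite -E1 -E2; apply: connect_map; last first.
    by apply: W; rewrite Hd ?E1 ?E2.
  by move=> x y /= /and3P [exy cx cy]; rewrite -He -!Hd exy cx cy.
- move=> W p1 p2 c1 c2.
  have := W (f p1) (f p2); rewrite -!Hd => /(_ c1 c2) /connectP [s].
  elim: s p1 c1 => [|z s IH] p1 c1 /=.
    by move=> _ /finj ->; exact: connect0.
  case/andP => /and3P [ez _ cz] pz El.
  have [p' Ep'] := Hpre _ cz.
  apply: connect_trans (connect1 _) (IH p' _ _ _).
  - by rewrite /= He Ep' ez c1 Hd Ep' cz.
  - by rewrite Hd Ep'.
  - by rewrite Ep'.
  - by rewrite Ep'.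
Qed.

Lemma vsq_block k (j j' : 'I_k) : j.+1 = j' ->
  vsquares (k + k).+1 j' = phi k @: setX [set: 'I_2] [set j; j'].
Proof.
move=> E; have Hj' := ltn_ord j'.
apply/setP => i; rewrite inE; apply/idP/imsetP.
- case/or4P => /eqP Hi.
  + exists (top, j); first by rewrite !inE eqxx.
    apply/val_inj; rewrite /= phiT; lia.
  + exists (top, j'); first by rewrite !inE eqxx orbT.
    apply/val_inj; rewrite /= phiT; lia.
  + exists (bot, j'); first by rewrite !inE eqxx orbT.
    apply/val_inj; rewrite /= phiB; lia.
  + exists (bot, j); first by rewrite !inE eqxx.
    apply/val_inj; rewrite /= phiB; lia.
- case=> [[a l]]; rewrite !inE => /andP [_ Hl] ->.
  case: (ord2P a) => ->; case/orP: Hl => /= /eqP ->; rewrite ?phiT ?phiB; lia.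
Qed.

Lemma vsq_card k (j j' : 'I_k) : j.+1 = j' -> #|vsquares (k + k).+1 j'| = 4.
Proof.
move=> E; rewrite (vsq_block k j j' E) (card_imset _ (@phi_inj k)) cardsX cardsT card_ord cards2.
have -> : j != j' by apply/eqP => /(congr1 (@nat_of_ord _)); lia.
by [].
Qed.

Lemma N2_noblock s k (c : {ffun 'I_(k + k).+1 -> bool}) : N2 s (k + k).+1 c ->
  forall j j' : 'I_k, j.+1 = j' ->
  ~~ [&& c (phi k (top, j)), c (phi k (bot, j)), c (phi k (top, j')) & c (phi k (bot, j'))].
Proof.
move=> H j j' E.
have Hx : 0 < j' < (k + k).+1 by have := ltn_ord j'; lia.
have := H j' Hx (fun _ => vsq_card k j j' E); apply: contra => /and4P [a b c' d].
apply/forall_inP => i; rewrite (vsq_block k j j' E) => /imsetP [[x l]].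
rewrite !inE => /andP [_ Hl] ->.
by case: (ord2P x) => ->; case/orP: Hl => /= /eqP ->.
Qed.

Lemma noblock_N2 s k (c : {ffun 'I_(k + k).+1 -> bool}) : c (center k) = false ->
  (forall j j' : 'I_k, j.+1 = j' ->
  ~~ [&& c (phi k (top, j)), c (phi k (bot, j)), c (phi k (top, j')) & c (phi k (bot, j'))]) ->
  N2 s (k + k).+1 c.
Proof.
move=> Hc H x Hx _; apply/negP => /forall_inP Hall.
case: (ltnP x k) => [xk|kx].
- have jl : x.-1 < k by lia.
  have jl' : x < k by lia.
  move/negP: (H (Ordinal jl) (Ordinal jl') ltac:(rewrite /=; lia)); apply.
  by rewrite !Hall // inE ?phiT ?phiB /=; lia.
case: (leqP x k.+1) => [xk1|kx1].
- have : c (center k) by apply: Hall; rewrite inE /=; lia.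
  by rewrite Hc.
- have jl : ((k + k).+1 - x).-1 < k by lia.
  have jl' : (k + k).+1 - x < k by lia.
  move/negP: (H (Ordinal jl) (Ordinal jl') ltac:(rewrite /=; lia)); apply.
  by rewrite !Hall // inE ?phiT ?phiB /=; lia.
Qed.

Lemma pre_water k (c : {ffun 'I_(k.+1 + k.+1).+1 -> bool}) : c (center k.+1) = false ->
  forall b, c b -> exists p, phi k.+1 p = b.
Proof.
move=> Hc b cb; apply: preim; apply/eqP => E; by rewrite E Hc in cb.
Qed.

Theorem lemma2p4 (k : nat) (s : star) : 1 <= k ->
  [/\ (forall c, inM0 s k c -> inN k (red k (contr k c))),
      (forall c1 c2, inM0 s k c1 -> inM0 s k c2 ->
          red k (contr k c1) = red k (contr k c2) -> c1 = c2)
    & (forall d, inN k d -> exists c, inM0 s k c /\ red k (contr k c) = d)].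
Proof.
case: k => [//|k] _; split.
- move=> c [[W N] Hc]; split.
  + apply: (proj2 (wc_transfer _ _ _ _ _ _ _ (@phi_inj k.+1) (redE k.+1 c) (@adjE k.+1)
      (pre_water _ _ Hc))); exact: W.
  + by move=> j j' E; rewrite !redE; exact: N2_noblock N j j' E.
- move=> c1 c2 [_ H1] [_ H2] E; apply/ffunP => i.
  case: (eqVneq i (center k.+1)) => [->|/preim [p <-]]; first by rewrite H1 H2.
  by rewrite -!redE E.
- move=> d [W NB].
  pose c := [ffun i => if i == center k.+1 then false else d (psi k i)].
  have cphi : forall p, c (phi k.+1 p) = d p.
    move=> p; rewrite ffunE (negbTE (phi_center _ _)).
    suff -> : psi k (phi k.+1 p) = p by [].
    by apply: phi_inj; rewrite phiK // phi_center.
  have Hc : c (center k.+1) = false by rewrite ffunE eqxx.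
  have Hd : red k.+1 (contr k.+1 c) = d by apply/ffunP => p; rewrite redE cphi.
  exists c; split => //; split => //; split.
  + have := wc_transfer _ _ _ _ _ _ _ (@phi_inj k.+1) (redE k.+1 c) (@adjE k.+1)
      (pre_water _ _ Hc).
    by rewrite Hd => -[+ _]; apply.
  + apply: noblock_N2 => // j j' E; rewrite !cphi; exact: NB.
Qed.
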